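(* Let $d,n \ge 1$ be fixed integers and let $C>0$. There is a constant $c>0$, independent of $q$, such that for every finite field $\mathbb{F}_q$ and every subset $E \subseteq \mathbb{F}_q^d$ which contains at least a proportion $C$ of all translation classes of $n$-configurations in $\mathbb{F}_q^d$, one has $|E| \ge c\, q^{d(1-\frac{1}{n})}$. In particular, a subset $E \subseteq \mathbb{F}_q^2$ of size of order of magnitude less than $q^{4/3}$ does not contain a positive proportion of translation classes of triangles in $\mathbb{F}_q^2$.
   Context: An $n$-configuration in $\mathbb{F}_q^d$ is an ordered $n$-tuple $(x_1,\dots,x_n)$ of points of $\mathbb{F}_q^d$; a triangle is a $3$-configuration. Two $n$-configurations are in the same translation class if there is $a \in \mathbb{F}_q^d$ with $y_i = x_i + a$ for all $i$. There are $q^{d(n-1)}$ translation classes. $E$ contains a translation class if some $n$-configuration with all entries in $E$ lies in that class. *)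

(* Defs.v *)
From HB Require Import structures.
From mathcomp Require Import all_boot all_order all_algebra.
From Stdlib Require Import Reals.
Set Implicit Arguments. Unset Strict Implicit. Unset Printing Implicit Defensive.
Import GRing.Theory.
Local Open Scope ring_scope.

Definition config (F : finFieldType) (d n : nat) := {ffun 'I_n -> 'rV[F]_d}.

Definition transl_class (F : finFieldType) (d n : nat) (x : config F d n)
  : {set config F d n} :=
  [set y : config F d n | [exists a : 'rV[F]_d, [forall i, y i == x i + a]]].

Definition all_classes (F : finFieldType) (d n : nat) : {set {set config F d n}} :=
  [set transl_class x | x : config F d n].

Definition classes_in (F : finFieldType) (d n : nat) (E : {set 'rV[F]_d})
  : {set {set config F d n}} :=
  [set transl_class x | x : config F d n & [forall i, x i \in E]].

(* Main.v *)
Require Import Defs.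
From HB Require Import structures.
From mathcomp Require Import all_boot all_order all_algebra.
From Stdlib Require Import Reals Lra Psatz.
Section Aux.
Import GRing.Theory.
Local Open Scope ring_scope.

Lemma classes_in_le (F : finFieldType) d n (E : {set 'rV[F]_d}) :
  (#|classes_in n E| <= expn #|E| n)%nat.
Proof.
rewrite /classes_in.
apply: leq_trans (leq_imset_card _ _) _.
rewrite -[n in expn _ n]card_ord -card_ffun_on.
apply: subset_leq_card; apply/subsetP => x; rewrite inE => /forallP H.
by apply/ffun_onP.
Qed.

Lemma all_classes_ge (F : finFieldType) d n : (1 <= n)%nat ->
  (expn #|F| (d * n) <= #|all_classes F d n| * expn #|F| d)%nat.
Proof.
case: n => // n _.
have -> : expn #|F| (d * n.+1) = #|{: config F d n.+1}|.
  by rewrite card_ffun card_mx card_ord mul1n expnM.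
have -> : expn #|F| d = #|{: 'rV[F]_d}| by rewrite card_mx mul1n.
have Hm : forall x : config F d n.+1, transl_class x \in all_classes F d n.+1.
  by move=> x; apply/imsetP; exists x.
have Hinj : injective (fun x : config F d n.+1 =>
   (exist (fun c => c \in all_classes F d n.+1) (transl_class x) (Hm x), x ord0)).
  move=> x y [] Hc H0.
  have : y \in transl_class x.
    rewrite Hc inE; apply/existsP; exists (0 : 'rV[F]_d); apply/forallP => i; by rewrite GRing.addr0.
  rewrite inE => /existsP [a /forallP Ha].
  move: (Ha ord0); rewrite -H0 -{1}[x ord0]addr0 => /eqP /addrI Ha0.
  apply/ffunP => i; move: (Ha i) => /eqP ->; by rewrite -Ha0 GRing.addr0.
have := leq_card _ Hinj.
by rewrite card_prod card_sig.
Qed.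
End Aux.

Lemma INR_expn (m k : nat) : INR (expn m k) = (INR m ^ k)%R.
Proof.
elim: k => [|k IH]; first by rewrite expn0.
by rewrite expnS -multE mult_INR IH.
Qed.

Lemma pow_lt_strict (x y : R) (k : nat) :
  (0 <= x)%R -> (x < y)%R -> (x ^ k.+1 < y ^ k.+1)%R.
Proof.
move=> Hx Hxy; elim: k => [|k IH]; first by simpl; lra.
change (x * x ^ k.+1 < y * y ^ k.+1)%R.
have H1 : (0 <= x ^ k.+1)%R by apply: pow_le.
apply: Rle_lt_trans (Rmult_le_compat_r _ _ _ H1 (Rlt_le _ _ Hxy)) _.
apply: Rmult_lt_compat_l; lra.
Qed.

Theorem theorem1p3 (d n : nat) (C : R) :
  (1 <= d)%N -> (1 <= n)%N -> (0 < C)%R ->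
  exists c : R, (0 < c)%R /\
    forall (F : finFieldType) (E : {set 'rV[F]_d}),
      (C * INR #|all_classes F d n| <= INR #|classes_in n E|)%R ->
      (c * Rpower (INR #|F|) (INR d * (1 - / INR n)) <= INR #|E|)%R.
Proof.
move=> Hd Hn HC.
have Hc : (0 < Rmin C 1)%R by apply: Rmin_pos; lra.
exists (Rmin C 1); split => // F E H.
set c := Rmin C 1 in Hc *.
have Hc1 : (c <= 1)%R by apply: Rmin_r.
have HcC : (c <= C)%R by apply: Rmin_l.
have Hq : (0 < INR #|F|)%R.
  apply: lt_0_INR; apply/ltP; apply/card_gt0P; by exists (@GRing.zero F).
set q := INR #|F| in Hq *.
set r := Rpower q (INR d * (1 - / INR n)).
have Hr : (0 < r)%R by rewrite /r /Rpower; apply: exp_pos.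
have Hn0 : (INR n <> 0)%R by apply: not_0_INR; move: Hn; case: (n) => //.
have Hrq : (r ^ n * q ^ d = q ^ (d * n))%R.
  rewrite -(Rpower_pow n _ Hr) -(Rpower_pow d _ Hq) -(Rpower_pow (d * n) _ Hq).
  rewrite /r Rpower_mult -Rpower_plus mult_INR.
  congr Rpower; field; exact: Hn0.
have HA : (q ^ (d * n) <= INR #|all_classes F d n| * q ^ d)%R.
  rewrite /q -!INR_expn -mult_INR; apply: le_INR; apply/leP.
  by rewrite mulnE; apply: all_classes_ge.
have Hqd : (0 < q ^ d)%R by apply: pow_lt.
have HrA : (r ^ n <= INR #|all_classes F d n|)%R.
  apply: (Rmult_le_reg_r (q ^ d)) => //; lra.
have HK : (INR #|classes_in n E| <= INR #|E| ^ n)%R.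
  rewrite -INR_expn; apply: le_INR; apply/leP; exact: classes_in_le.
have Hcn : (c ^ n <= C)%R.
  case: n Hn {Hn0 Hrq HA HrA HK H r Hr} => // k _.
  change (c * c ^ k <= C)%R.
  have : (c ^ k <= 1)%R by rewrite -(pow1 k); apply: pow_incr; lra.
  have : (0 <= c ^ k)%R by apply: pow_le; lra.
  nra.
have Hfin : ((c * r) ^ n <= INR #|E| ^ n)%R.
  rewrite Rpow_mult_distr.
  have H0A : (0 <= INR #|all_classes F d n|)%R by apply: pos_INR.
  have : (0 <= r ^ n)%R by apply: pow_le; lra.
  have : (0 <= c ^ n)%R by apply: pow_le; lra.
  nra.
case: (Rle_lt_dec (c * r) (INR #|E|)) => // Hlt.
exfalso.
move: Hfin; case: (n) Hn => // k _ Hfin.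
have := @pow_lt_strict _ _ k (pos_INR #|E|) Hlt.
lra.
Qed.
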